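(* Let $p$ be a prime and $d,\ell$ positive integers. Then \[ \Gamma(d,p,\ell)=\{\operatorname{CT}(\lambda(M,w)): M\in\operatorname{CGL}_d(p)^{(\ell)},\ w\in\mathbb{F}_p^d\}. \]
   Context: Vectors in $\mathbb{F}_p^d$ are row vectors; for a $(d\times d)$-matrix $M$ over $\mathbb{F}_p$ and $v\in\mathbb{F}_p^d$, $\lambda(M,v)$ is the map $x\mapsto xM+v$ on $\mathbb{F}_p^d$. $\operatorname{AGL}_d(p)=\{\lambda(M,v):M\in\operatorname{GL}_d(p),v\in\mathbb{F}_p^d\}$. $\operatorname{CGL}_d(p)$ is the set of $A\in\operatorname{GL}_d(p)$ without eigenvalue $-1$, $\operatorname{ACGL}_d(p)=\{\lambda(A,v):A\in\operatorname{CGL}_d(p),v\in\mathbb{F}_p^d\}$, and $\operatorname{CGL}_d(p)^{(\ell)}=\{A_1\cdots A_\ell:A_i\in\operatorname{CGL}_d(p)\}$. The cycle type $\operatorname{CT}(\sigma)$ of a permutation $\sigma$ of a finite set $\Omega$ is the monomial $x_1^{k_1}\cdots x_{|\Omega|}^{k_{|\Omega|}}\in\mathbb{Q}[x_n:n\ge1]$ with $k_j$ the number of $j$-cycles of $\sigma$, and $\operatorname{CT}(X)=\{\operatorname{CT}(\sigma):\sigma\in X\}$. Define \[ \Gamma(d,p,\ell)=\begin{cases}\operatorname{CT}(\operatorname{ACGL}_d(p)), & \ell=1,\\ \operatorname{CT}(\operatorname{AGL}_d(p)), & \ell\geq2,\ (d,p)\notin\{(1,2),(1,3),(2,2)\},\\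 \emptyset, & \ell\geq2,\ (d,p)=(1,2),\\ \{x_1^3,x_3\}, & \ell\ge2,\ (d,p)=(1,3),\\ \{x_1^4,x_2^2,x_1x_3\}, & \ell\geq 2,\ (d,p)=(2,2).\end{cases} \] *)

(* Defs.v *)
From HB Require Import structures.
From mathcomp Require Import all_boot all_order all_algebra.
Set Implicit Arguments. Unset Strict Implicit. Unset Printing Implicit Defensive.
Import GRing.Theory.
Local Open Scope ring_scope.

Definition aff (p d : nat) (M : 'M['F_p]_d) (v : 'rV['F_p]_d) :
  'rV['F_p]_d -> 'rV['F_p]_d := fun x => x *m M + v.

Definition cycle_count (T : finType) (f : T -> T) (j : nat) : nat :=
  #|[set [set y | fconnect f x y] | x : T & order f x == j]|.

(* Cycle type x_1^{k_1} ... x_{|T|}^{k_{|T|}}, represented by its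
   exponent vector [:: k_1; ...; k_{|T|}]. *)
Definition CT (T : finType) (f : T -> T) : seq nat :=
  [seq cycle_count f j | j <- iota 1 #|T|].

Definition CGL (p d : nat) : pred 'M['F_p]_d :=
  [pred A | (A \in unitmx) && ~~ eigenvalue A (-1)].

Definition CGLpow (p d l : nat) (M : 'M['F_p]_d) : Prop :=
  exists s : seq 'M['F_p]_d,
    [/\ size s = l, all (@CGL p d) s & M = foldr (fun A B => A *m B) 1%:M s].

Definition Gamma (d p l : nat) (c : seq nat) : Prop :=
  if l == 1%N then
    exists (A : 'M['F_p]_d) (v : 'rV['F_p]_d), A \in @CGL p d /\ c = CT (aff A v)
  else if (d, p) == (1, 2)%N then False
  else if (d, p) == (1, 3)%N then c = [:: 3; 0; 0]%N \/ c = [:: 0; 0; 1]%N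
  else if (d, p) == (2, 2)%N then
    [\/ c = [:: 4; 0; 0; 0]%N, c = [:: 0; 2; 0; 0]%N | c = [:: 1; 0; 1; 0]%N]
  else exists (M : 'M['F_p]_d) (v : 'rV['F_p]_d), M \in unitmx /\ c = CT (aff M v).

(* Main.v *)
Require Import Defs.
From HB Require Import structures.
From mathcomp Require Import all_boot all_order all_algebra.
From mathcomp Require Import zify.
Set Implicit Arguments. Unset Strict Implicit. Unset Printing Implicit Defensive.
Import GRing.Theory.
Local Open Scope ring_scope.

Section DetL.
Variable R : comNzRingType.

Definition sumL (F : nat -> R) n := foldr (fun j acc => F j + acc) 0 (iota 0 n).

Lemma sumLE F n : sumL F n = \sum_(j < n) F j.
Proof.
rewrite /sumL -(big_mkord xpredT) /index_iota subn0.
by elim: (iota 0 n) => [|x s IH]; rewrite ?big_nil /= ?big_cons ?IH.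
Qed.

Fixpoint detL (n : nat) (a : nat -> nat -> R) {struct n} : R :=
  match n with
  | 0 => 1
  | n'.+1 => sumL (fun j => (-1) ^+ j * a 0%N j * detL n' (fun r c => a r.+1 (bump j c))) n'.+1
  end.

Definition entf m n (A : 'M[R]_(m, n)) (i j : nat) : R :=
  match (insub i : option 'I_m), (insub j : option 'I_n) with
  | Some i', Some j' => A i' j'
  | _, _ => 0
  end.

Lemma entfE m n (A : 'M[R]_(m, n)) (i : 'I_m) (j : 'I_n) : entf A i j = A i j.
Proof. by rewrite /entf !valK. Qed.

Lemma entf_out m n (A : 'M[R]_(m, n)) i j : ~~ ((i < m) && (j < n))%N -> entf A i j = 0.
Proof.
move=> /nandP[h|h]; rewrite /entf; first by rewrite insubN.
by case: (insub i) => // ?; rewrite insubN.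
Qed.

Lemma sumL_eq (F G : nat -> R) n : (forall j, (j < n)%N -> F j = G j) -> sumL F n = sumL G n.
Proof.
move=> H; rewrite !sumLE; apply: eq_bigr => j _; exact: H.
Qed.

Lemma eq_detL n (a b : nat -> nat -> R) :
  (forall i j, (i < n)%N -> (j < n)%N -> a i j = b i j) -> detL n a = detL n b.
Proof.
elim: n a b => [//|n IH] a b H /=; apply: sumL_eq => j hj.
rewrite H //; congr (_ * _); apply: IH => r c hr hc; apply: H => //.
by rewrite /bump; case: (j <= c)%N => /=; lia.
Qed.

Lemma detL_correct n (A : 'M[R]_n) : \det A = detL n (entf A).
Proof.
elim: n A => [|n IH] A; first by rewrite det_mx00.
rewrite (expand_det_row _ ord0) /= sumLE; apply: eq_bigr => j _.
rewrite /cofactor IH -[0%N]/(val (ord0 : 'I_n.+1)) entfE /= add0n.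
rewrite [_ * A _ _]mulrC -mulrA; congr (_ * (_ * _)).
apply: eq_detL => r c hr hc.
have -> : r.+1 = val (lift ord0 (Ordinal hr)) by [].
have -> : bump j c = val (lift j (Ordinal hc)) by [].
by rewrite -[r]/(val (Ordinal hr)) -[c]/(val (Ordinal hc)) !entfE !mxE.
Qed.

Lemma entfD m n (A B : 'M[R]_(m, n)) i j : entf (A + B) i j = entf A i j + entf B i j.
Proof.
case: (boolP ((i < m) && (j < n))%N) => [/andP[hi hj]|h]; last by rewrite !entf_out // addr0.
by rewrite -[i]/(val (Ordinal hi)) -[j]/(val (Ordinal hj)) !entfE mxE.
Qed.

Lemma entf1 n i j : (i < n)%N -> (j < n)%N -> entf (1%:M : 'M[R]_n) i j = (i == j)%:R.
Proof.
by move=> hi hj; rewrite -[i]/(val (Ordinal hi)) -[j]/(val (Ordinal hj)) !entfE mxE.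
Qed.

Lemma entf_mx m n (f : nat -> nat -> R) i j : (i < m)%N -> (j < n)%N ->
  entf (\matrix_(i0 < m, j0 < n) f i0 j0) i j = f i j.
Proof.
by move=> hi hj; rewrite -[i]/(val (Ordinal hi)) -[j]/(val (Ordinal hj)) !entfE mxE.
Qed.

End DetL.

Section GoodCond.
Variable F : fieldType.

Definition Good n (K : 'M[F]_n) :=
  exists X : 'M[F]_n, [/\ X \in unitmx, X + 1%:M \in unitmx & X + K \in unitmx].

Definition condF n (r k : nat -> nat -> F) :=
  [&& detL n r != 0, detL n (fun i j => r i j + (i == j)%:R) != 0
    & detL n (fun i j => r i j + k i j) != 0].

Lemma unitmx_detL n (A : 'M[F]_n) : (A \in unitmx) = (detL n (entf A) != 0).
Proof. by rewrite unitmxE unitfE detL_correct. Qed.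

Lemma good_of_condF n (K : 'M[F]_n) r : condF n r (entf K) -> Good K.
Proof.
case/and3P=> h1 h2 h3; exists (\matrix_(i < n, j < n) r i j); rewrite !unitmx_detL; split.
- by rewrite (eq_detL (b := r)) // => i j hi hj; rewrite entf_mx.
- by rewrite (eq_detL (b := fun i j => r i j + (i == j)%:R)) // => i j hi hj;
    rewrite entfD entf_mx // entf1.
- by rewrite (eq_detL (b := fun i j => r i j + entf K i j)) // => i j hi hj;
    rewrite entfD entf_mx.
Qed.

End GoodCond.

Section F2.
Local Notation F2 := ('F_2 : fieldType).

Definition beta (x : F2) : bool := x != 0.

Lemma F2_cases (x : F2) : x = 0 \/ x = 1.
Proof. by case: x => [[|[|//]] Hm]; [left|right]; apply: val_inj. Qed.

Lemma betaD (x y : F2) : beta (x + y) = xorb (beta x) (beta y).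
Proof. by case: (F2_cases x) => ->; case: (F2_cases y) => ->. Qed.
Lemma betaM (x y : F2) : beta (x * y) = beta x && beta y.
Proof. by case: (F2_cases x) => ->; case: (F2_cases y) => ->. Qed.
Lemma betaN (x : F2) : beta (- x) = beta x.
Proof. by case: (F2_cases x) => ->. Qed.
Lemma beta_nat (b : bool) : beta (b%:R) = b.
Proof. by case: b. Qed.
Lemma F2_beta (x : F2) : x = (beta x)%:R.
Proof. by case: (F2_cases x) => ->. Qed.
Lemma beta_m1X j : beta ((-1) ^+ j) = true.
Proof. by elim: j => [//|j IH]; rewrite exprS betaM IH betaN. Qed.

Definition sumLb (F : nat -> bool) n := foldr (fun j acc => xorb (F j) acc) false (iota 0 n).

Fixpoint detLb (n : nat) (a : nat -> nat -> bool) {struct n} : bool :=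
  match n with
  | 0 => true
  | n'.+1 => sumLb (fun j => a 0%N j && detLb n' (fun r c => a r.+1 (bump j c))) n'.+1
  end.

Lemma sumLb_eq (F G : nat -> bool) n : (forall j, (j < n)%N -> F j = G j) -> sumLb F n = sumLb G n.
Proof.
rewrite /sumLb => H; have : all (fun j => j < n)%N (iota 0 n).
  by apply/allP => j; rewrite mem_iota.
elim: (iota 0 n) => [//|x s IH] /= /andP[hx hs]; by rewrite H // IH.
Qed.

Lemma eq_detLb n (a b : nat -> nat -> bool) :
  (forall i j, (i < n)%N -> (j < n)%N -> a i j = b i j) -> detLb n a = detLb n b.
Proof.
elim: n a b => [//|n IH] a b H /=; apply: sumLb_eq => j hj.
rewrite H //; congr (_ && _); apply: IH => r c hr hc; apply: H => //.
by rewrite /bump; case: (j <= c)%N => /=; lia.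
Qed.

Lemma beta_detL n (a : nat -> nat -> F2) : beta (detL n a) = detLb n (fun i j => beta (a i j)).
Proof.
elim: n a => [//|n IH] a /=.
rewrite /sumL /sumLb; elim: (iota 0 n.+1) => [//|x s IHs] /=.
by rewrite betaD IHs !betaM beta_m1X IH.
Qed.

Definition condb n (r k : nat -> nat -> bool) :=
  [&& detLb n r, detLb n (fun i j => xorb (r i j) (i == j))
    & detLb n (fun i j => xorb (r i j) (k i j))].

Lemma good_of_condb n (K : 'M[F2]_n) rb :
  condb n rb (fun i j => beta (entf K i j)) -> Good K.
Proof.
case/and3P=> h1 h2 h3; apply: (@good_of_condF _ n K (fun i j => (rb i j)%:R)).
rewrite /condF -!/(beta _) !beta_detL; apply/and3P; split.
- by rewrite (eq_detLb (b := rb)) // => i j _ _; rewrite beta_nat.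
- by rewrite (eq_detLb (b := fun i j => xorb (rb i j) (i == j))) // => i j _ _;
    rewrite betaD !beta_nat.
- by rewrite (eq_detLb (b := fun i j => xorb (rb i j) (beta (entf K i j)))) // => i j _ _;
    rewrite betaD !beta_nat.
Qed.

Fixpoint blists k : seq (seq bool) :=
  match k with 0 => [:: [::]] | k'.+1 => [seq b :: l | b <- [:: false; true], l <- blists k'] end.

Lemma blistsP l : l \in blists (size l).
Proof.
elim: l => [|b l IH]; first by rewrite /= mem_seq1.
rewrite [size _]/=; apply/allpairsP; exists (b, l); split => //; case: b => //.
Qed.

Definition fromL n (l : seq bool) i j := nth false l (i * n + j).
Definition cf (rows : seq (seq bool)) i j := nth false (nth [::] rows i) j.

Definition listK n (K : 'M[F2]_n) :=
  [seq beta (entf K (k %/ n) (k %% n)) | k <- iota 0 (n * n)].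

Lemma size_listK n (K : 'M[F2]_n) : size (listK K) = (n * n)%N.
Proof. by rewrite size_map size_iota. Qed.

Lemma fromL_K n (K : 'M[F2]_n) i j : (i < n)%N -> (j < n)%N ->
  fromL n (listK K) i j = beta (entf K i j).
Proof.
move=> hi hj; have hk : (i * n + j < n * n)%N.
  by nia.
rewrite /fromL /listK (nth_map 0%N) ?size_iota // nth_iota // add0n.
have hn : (0 < n)%N by lia.
by rewrite divnMDl // modnMDl divn_small // modn_small // addn0.
Qed.

Lemma bf_all n (cands : seq (seq (seq bool))) :
  all (fun l => has (fun rows => condb n (cf rows) (fromL n l)) cands) (blists (n * n)) ->
  forall K : 'M[F2]_n, Good K.
Proof.
move=> /allP H K; have := H _ (eq_ind _ (fun k => _ \in blists k) (blistsP (listK K)) _ (size_listK K)).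
case/hasP=> rows _ /and3P[h1 h2 h3]; apply: (@good_of_condb n K (cf rows)).
apply/and3P; split => //.
by rewrite -(eq_detLb (a := fun i j => xorb (cf rows i j) (fromL n (listK K) i j))) // => i j hi hj;
  rewrite fromL_K.
Qed.

End F2.

Section Block.
Variable R : comNzRingType.

Lemma entf_val m n (A : 'M[R]_(m, n)) i j (I : 'I_m) (J : 'I_n) :
  val I = i -> val J = j -> entf A i j = A I J.
Proof. by move=> <- <-; exact: entfE. Qed.
Arguments entf_val [m n] A [i j] I J.

Lemma entf_block s1 s2 t1 t2 (Aul : 'M[R]_(s1, t1)) (Aur : 'M[R]_(s1, t2))
  (Adl : 'M[R]_(s2, t1)) (Adr : 'M[R]_(s2, t2)) i j :
  entf (block_mx Aul Aur Adl Adr) i j =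
  if (i < s1)%N then (if (j < t1)%N then entf Aul i j else entf Aur i (j - t1))
  else (if (j < t1)%N then entf Adl (i - s1) j else entf Adr (i - s1) (j - t1)).
Proof.
case: (boolP ((i < s1 + s2) && (j < t1 + t2))%N) => [/andP[hi hj] | h]; last first.
  rewrite entf_out //; case: ifP => hi1; case: ifP => hj1; rewrite entf_out //;
  apply/negP => /andP[h1 h2]; move/negP: h; apply; apply/andP; split; lia.
case: ltnP => hi1; case: ltnP => hj1.
- rewrite (entf_val _ (lshift s2 (Ordinal hi1)) (lshift t2 (Ordinal hj1))) //.
  by rewrite block_mxEul (entf_val _ (Ordinal hi1) (Ordinal hj1)).
- have hj2 : (j - t1 < t2)%N by lia.
  rewrite (entf_val _ (lshift s2 (Ordinal hi1)) (rshift t1 (Ordinal hj2))) /= ?subnKC //.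
  by rewrite block_mxEur (entf_val _ (Ordinal hi1) (Ordinal hj2)).
- have hi2 : (i - s1 < s2)%N by lia.
  rewrite (entf_val _ (rshift s1 (Ordinal hi2)) (lshift t2 (Ordinal hj1))) /= ?subnKC //.
  by rewrite block_mxEdl (entf_val _ (Ordinal hi2) (Ordinal hj1)).
- have hi2 : (i - s1 < s2)%N by lia.
  have hj2 : (j - t1 < t2)%N by lia.
  rewrite (entf_val _ (rshift s1 (Ordinal hi2)) (rshift t1 (Ordinal hj2))) /= ?subnKC //.
  by rewrite block_mxEdr (entf_val _ (Ordinal hi2) (Ordinal hj2)).
Qed.

End Block.
Arguments entf_val [R m n] A [i j] I J.


Lemma bf_shape_b n k (sh : seq bool -> nat -> nat -> bool) (cands : seq (seq (seq bool))) :
  all (fun l => has (fun rows => condb n (cf rows) (sh l)) cands) (blists k) ->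
  forall (K : 'M['F_2]_n) l, size l = k ->
  (forall i j, (i < n)%N -> (j < n)%N -> sh l i j = beta (entf K i j)) -> Good K.
Proof.
move=> /allP H K l hl hsh; have := H l; rewrite -hl blistsP => /(_ isT).
case/hasP=> rows _ /and3P[h1 h2 h3]; apply: (@good_of_condb n K (cf rows)).
apply/and3P; split => //.
by rewrite -(eq_detLb (a := fun i j => xorb (cf rows i j) (sh l i j))) // => i j hi hj;
  rewrite hsh.
Qed.

Section FL.
Variable F : fieldType.

Fixpoint flists (vals : seq F) k : seq (seq F) :=
  match k with 0 => [:: [::]] | k'.+1 => [seq x :: l | x <- vals, l <- flists vals k'] end.

Lemma flistsP vals l : all (mem vals) l -> l \in flists vals (size l).
Proof.
elim: l => [|x l IH]; first by rewrite /= mem_seq1.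
move=> /andP[hx hl]; rewrite [size _]/=; apply/allpairsP; exists (x, l); split => //.
exact: IH.
Qed.

Definition cfF (rows : seq (seq F)) i j := nth 0 (nth [::] rows i) j.

Lemma bf_shape_F n k (vals : seq F) (sh : seq F -> nat -> nat -> F) (cands : seq (seq (seq F))) :
  all (fun l => has (fun rows => condF n (cfF rows) (sh l)) cands) (flists vals k) ->
  forall (K : 'M[F]_n) l, size l = k -> all (mem vals) l ->
  (forall i j, (i < n)%N -> (j < n)%N -> sh l i j = entf K i j) -> Good K.
Proof.
move=> /allP H K l hl hv hsh; have := H l; rewrite -hl (flistsP hv) => /(_ isT).
case/hasP=> rows _ /and3P[h1 h2 h3]; apply: (@good_of_condF _ n K (cfF rows)).
apply/and3P; split => //.
by rewrite -(eq_detL (a := fun i j => cfF rows i j + sh l i j)) // => i j hi hj;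
  rewrite hsh.
Qed.

End FL.

Lemma entf0 (R : comNzRingType) m n i j : entf (0 : 'M[R]_(m, n)) i j = 0.
Proof.
case: (boolP ((i < m) && (j < n))%N) => [/andP[hi hj]|h]; last by rewrite entf_out.
by rewrite (entf_val _ (Ordinal hi) (Ordinal hj)) // mxE.
Qed.

Definition shDb (s t : nat) (l : seq bool) (i j : nat) :=
  if ((i < s) && (j < s))%N then nth false l (i * s + j)%N
  else if ((s <= i) && (s <= j))%N then nth false l (s * s + ((i - s) * t + (j - s)))%N
  else false.

Lemma shDb_K s t (K1 : 'M['F_2]_s) (K2 : 'M['F_2]_t) i j :
  (i < s + t)%N -> (j < s + t)%N ->
  shDb s t (listK K1 ++ listK K2) i j = beta (entf (block_mx K1 0 0 K2) i j).
Proof.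
move=> hi hj; rewrite entf_block /shDb.
case: (ltnP i s) => hi1; case: (ltnP j s) => hj1 /=; rewrite ?entf0 ?hi1 ?hj1 /=.
- rewrite nth_cat size_listK ifT; last by nia.
  exact: fromL_K.
- by [].
- by [].
- rewrite nth_cat size_listK ifF; last by nia.
  rewrite -[(s * s + _ - s * s)%N]/(((s * s + _) - s * s)%N) addKn.
  apply: fromL_K; lia.
Qed.

Section FLK.
Variable F : fieldType.
Definition fromLF n (l : seq F) i j := nth 0 l (i * n + j).
Definition listKF n (K : 'M[F]_n) :=
  [seq entf K (k %/ n) (k %% n) | k <- iota 0 (n * n)].

Lemma size_listKF n (K : 'M[F]_n) : size (listKF K) = (n * n)%N.
Proof. by rewrite size_map size_iota. Qed.

Lemma fromLF_K n (K : 'M[F]_n) i j : (i < n)%N -> (j < n)%N ->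
  fromLF n (listKF K) i j = entf K i j.
Proof.
move=> hi hj; have hk : (i * n + j < n * n)%N by nia.
rewrite /fromLF /listKF (nth_map 0%N) ?size_iota // nth_iota // add0n.
have hn : (0 < n)%N by lia.
by rewrite divnMDl // modnMDl divn_small // modn_small // addn0.
Qed.

Definition shDF (s t : nat) (l : seq F) (i j : nat) :=
  if ((i < s) && (j < s))%N then nth 0 l (i * s + j)%N
  else if ((s <= i) && (s <= j))%N then nth 0 l (s * s + ((i - s) * t + (j - s)))%N
  else 0.

Lemma shDF_K s t (K1 : 'M[F]_s) (K2 : 'M[F]_t) i j :
  (i < s + t)%N -> (j < s + t)%N ->
  shDF s t (listKF K1 ++ listKF K2) i j = entf (block_mx K1 0 0 K2) i j.
Proof.
move=> hi hj; rewrite entf_block /shDF.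
case: (ltnP i s) => hi1; case: (ltnP j s) => hj1 /=; rewrite ?entf0 ?hi1 ?hj1 /=.
- rewrite nth_cat size_listKF ifT; last by nia.
  exact: fromLF_K.
- by [].
- by [].
- rewrite nth_cat size_listKF ifF; last by nia.
  rewrite addKn.
  apply: fromLF_K; lia.
Qed.

Lemma all_listKF n (vals : seq F) (K : 'M[F]_n) : (forall x : F, x \in vals) -> all (mem vals) (listKF K).
Proof. by move=> H; apply/allP => x _; exact: H. Qed.
End FLK.

Definition cand2b : seq (seq (seq bool)) := [:: [:: [:: false; true]; [:: true; true]];
  [:: [:: true; true]; [:: true; false]]].
Definition cand3b : seq (seq (seq bool)) := [:: [:: [:: false; false; true]; [:: false; true; true]; [:: true; true; false]];
  [:: [:: false; true; false]; [:: true; false; true]; [:: true; false; false]];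
  [:: [:: false; true; true]; [:: true; true; true]; [:: false; true; false]];
  [:: [:: true; false; true]; [:: true; false; false]; [:: false; true; true]];
  [:: [:: false; false; true]; [:: true; false; false]; [:: false; true; true]];
  [:: [:: false; true; false]; [:: true; true; true]; [:: true; true; false]];
  [:: [:: false; true; false]; [:: false; false; true]; [:: true; true; false]];
  [:: [:: true; false; true]; [:: true; true; false]; [:: true; true; true]];
  [:: [:: false; false; true]; [:: false; true; true]; [:: true; true; true]];
  [:: [:: false; false; true]; [:: true; false; false]; [:: true; true; false]]].
Definition cand4b : seq (seq (seq bool)) := [:: [:: [:: false; true; false; false]; [:: true; false; true; true]; [:: false; true; false; true]; [:: true; true; false; false]];
  [:: [:: true; false; true; false]; [:: true; true; false; true]; [:: true; false; false; false]; [:: true; true; true; false]];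
  [:: [:: false; true; false; true]; [:: false; false; false; true]; [:: true; true; false; false]; [:: true; false; true; true]];
  [:: [:: true; false; false; true]; [:: false; false; true; false]; [:: true; true; false; true]; [:: false; false; true; true]];
  [:: [:: false; true; true; false]; [:: true; false; false; false]; [:: true; false; false; true]; [:: false; true; false; true]];
  [:: [:: false; false; true; false]; [:: true; false; true; false]; [:: false; false; false; true]; [:: false; true; false; false]];
  [:: [:: false; false; false; true]; [:: true; false; true; true]; [:: true; true; true; true]; [:: true; true; false; true]];
  [:: [:: true; true; false; true]; [:: true; true; true; false]; [:: false; true; true; false]; [:: false; false; true; false]];
  [:: [:: false; false; true; false]; [:: false; false; true; true]; [:: true; false; true; false]; [:: false; true; true; true]];
  [:: [:: true; false; false; true]; [:: true; true; true; true]; [:: false; true; false; true]; [:: true; false; false; false]];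
  [:: [:: true; false; true; false]; [:: true; true; false; false]; [:: false; true; true; true]; [:: true; false; false; false]];
  [:: [:: false; false; true; true]; [:: true; false; true; false]; [:: true; true; true; false]; [:: true; true; false; false]];
  [:: [:: true; false; true; true]; [:: true; true; true; true]; [:: true; true; false; false]; [:: false; true; true; false]];
  [:: [:: true; true; true; false]; [:: false; true; true; true]; [:: true; true; false; true]; [:: false; true; false; true]];
  [:: [:: true; true; true; true]; [:: false; false; true; false]; [:: true; false; true; true]; [:: true; true; false; false]];
  [:: [:: false; true; true; false]; [:: false; true; false; true]; [:: true; false; false; true]; [:: false; true; true; true]];
  [:: [:: true; true; true; true]; [:: true; true; true; false]; [:: true; true; false; false]; [:: true; false; false; true]];
  [:: [:: false; false; false; true]; [:: false; false; true; true]; [:: false; true; true; false]; [:: true; false; false; true]];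
  [:: [:: false; false; true; false]; [:: true; false; true; true]; [:: true; true; true; true]; [:: false; true; true; true]]].
Definition cand5b : seq (seq (seq bool)) := [:: [:: [:: true; false; false; true; true]; [:: true; false; true; true; true]; [:: true; true; true; true; false]; [:: true; true; true; true; true]; [:: true; false; false; false; true]];
  [:: [:: true; false; true; true; true]; [:: true; true; false; false; true]; [:: true; false; true; false; false]; [:: true; true; true; true; true]; [:: false; true; true; true; true]];
  [:: [:: true; true; true; false; true]; [:: false; true; true; true; true]; [:: false; true; true; false; false]; [:: true; true; false; false; true]; [:: false; false; true; false; true]];
  [:: [:: false; false; true; true; false]; [:: false; true; false; true; true]; [:: false; false; false; false; true]; [:: false; true; true; true; false]; [:: true; true; true; false; false]];
  [:: [:: true; true; true; true; true]; [:: true; true; true; false; false]; [:: false; true; true; true; false]; [:: true; true; true; true; false]; [:: false; true; false; false; false]];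
  [:: [:: true; true; true; true; false]; [:: false; false; true; false; false]; [:: false; true; false; false; true]; [:: true; true; false; true; true]; [:: false; true; false; true; false]];
  [:: [:: true; false; false; true; false]; [:: true; false; true; true; true]; [:: true; false; false; false; true]; [:: false; false; true; false; false]; [:: false; true; false; false; false]];
  [:: [:: false; true; true; false; false]; [:: false; false; true; true; true]; [:: false; false; false; true; false]; [:: true; true; true; false; false]; [:: true; true; false; true; false]];
  [:: [:: false; true; true; true; false]; [:: false; false; true; true; true]; [:: true; true; true; true; false]; [:: true; true; true; false; true]; [:: false; true; false; false; false]];
  [:: [:: false; true; false; true; false]; [:: true; false; true; false; true]; [:: false; false; true; true; true]; [:: true; true; true; true; false]; [:: true; false; true; true; false]];
  [:: [:: true; true; true; true; false]; [:: false; false; true; true; true]; [:: false; true; true; false; false]; [:: true; false; false; false; false]; [:: false; true; true; false; true]];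
  [:: [:: true; true; true; false; true]; [:: true; true; true; true; false]; [:: true; false; true; true; true]; [:: true; true; true; true; true]; [:: false; false; true; true; false]];
  [:: [:: true; false; false; true; false]; [:: true; true; false; false; true]; [:: false; true; true; true; false]; [:: false; false; true; true; false]; [:: true; false; true; false; true]]].
Definition cand2f : seq (seq (seq 'F_3)) := [:: [:: [:: 0%:R; 1%:R]; [:: 1%:R; 1%:R]];
  [:: [:: 0%:R; 2%:R]; [:: 2%:R; 1%:R]];
  [:: [:: 1%:R; 0%:R]; [:: 0%:R; 1%:R]];
  [:: [:: 1%:R; 1%:R]; [:: 1%:R; 0%:R]]].
Definition cand3f : seq (seq (seq 'F_3)) := [:: [:: [:: 0%:R; 0%:R; 1%:R]; [:: 0%:R; 1%:R; 0%:R]; [:: 1%:R; 0%:R; 1%:R]];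
  [:: [:: 0%:R; 1%:R; 1%:R]; [:: 1%:R; 0%:R; 0%:R]; [:: 1%:R; 0%:R; 1%:R]];
  [:: [:: 0%:R; 2%:R; 1%:R]; [:: 2%:R; 2%:R; 0%:R]; [:: 2%:R; 0%:R; 0%:R]];
  [:: [:: 0%:R; 0%:R; 1%:R]; [:: 0%:R; 1%:R; 0%:R]; [:: 1%:R; 0%:R; 2%:R]]].

Lemma chk3 : all (fun l => has (fun rows => condb 3 (cf rows) (fromL 3 l)) cand3b) (blists (3 * 3)).
Proof. by vm_compute. Qed.
Definition d4x (a00 a01 a02 a03 a10 a11 a12 a13 a20 a21 a22 a23 a30 a31 a32 a33 : bool) : bool :=
  (xorb (a00 && (xorb (a11 && (xorb (a22 && (xorb (a33 && true) false)) (xorb (a23 && (xorb (a32 && true) false)) false))) (xorb (a12 && (xorb (a21 && (xorb (a33 && true) false)) (xorb (a23 && (xorb (a31 && true) false)) false))) (xorb (a13 && (xorb (a21 && (xorb (a32 && true) false)) (xorb (a22 && (xorb (a31 && true) false)) false))) false)))) (xorb (a01 && (xorb (a10 && (xorb (a22 && (xorb (a33 && true) false)) (xorb (a23 && (xorb (a32 && true) false)) false))) (xorb (a12 && (xorb (a20 && (xorb (a33 && true) false)) (xorb (a23 && (xorb (a30 && true) false)) false))) (xorb (a13 && (xorb (a20 && (xorb (a32 && true) false)) (xorb (a22 && (xorb (a30 && true) false)) false))) false)))) (xorb (a02 && (xorb (a10 && (xorb (a21 && (xorb (a33 && true) false)) (xorb (a23 && (xorb (a31 && true) false)) false))) (xorb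 (a11 && (xorb (a20 && (xorb (a33 && true) false)) (xorb (a23 && (xorb (a30 && true) false)) false))) (xorb (a13 && (xorb (a20 && (xorb (a31 && true) false)) (xorb (a21 && (xorb (a30 && true) false)) false))) false)))) (xorb (a03 && (xorb (a10 && (xorb (a21 && (xorb (a32 && true) false)) (xorb (a22 && (xorb (a31 && true) false)) false))) (xorb (a11 && (xorb (a20 && (xorb (a32 && true) false)) (xorb (a22 && (xorb (a30 && true) false)) false))) (xorb (a12 && (xorb (a20 && (xorb (a31 && true) false)) (xorb (a21 && (xorb (a30 && true) false)) false))) false)))) false)))).
Lemma detLb4E (a : nat -> nat -> bool) : detLb 4 a = d4x (a 0 0) (a 0 1) (a 0 2) (a 0 3) (a 1 0) (a 1 1) (a 1 2) (a 1 3) (a 2 0) (a 2 1) (a 2 2) (a 2 3) (a 3 0) (a 3 1) (a 3 2) (a 3 3).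
Proof. reflexivity. Qed.
Definition d5x (a00 a01 a02 a03 a04 a10 a11 a12 a13 a14 a20 a21 a22 a23 a24 a30 a31 a32 a33 a34 a40 a41 a42 a43 a44 : bool) : bool :=
  (xorb (a00 && (xorb (a11 && (xorb (a22 && (xorb (a33 && (xorb (a44 && true) false)) (xorb (a34 && (xorb (a43 && true) false)) false))) (xorb (a23 && (xorb (a32 && (xorb (a44 && true) false)) (xorb (a34 && (xorb (a42 && true) false)) false))) (xorb (a24 && (xorb (a32 && (xorb (a43 && true) false)) (xorb (a33 && (xorb (a42 && true) false)) false))) false)))) (xorb (a12 && (xorb (a21 && (xorb (a33 && (xorb (a44 && true) false)) (xorb (a34 && (xorb (a43 && true) false)) false))) (xorb (a23 && (xorb (a31 && (xorb (a44 && true) false)) (xorb (a34 && (xorb (a41 && true) false)) false))) (xorb (a24 && (xorb (a31 && (xorb (a43 && true) false)) (xorb (a33 && (xorb (a41 && true) false)) false))) false)))) (xorb (a13 && (xorb (a21 && (xorb (a32 && (xorb (a44 && true) false)) (xorb (a34 && (xorb (a42 && true) false)) false))) (xorb (a22 && (xorb (a31 && (xorb (a44 && true) false)) (xorb (a34 && (xorb (a41 && true) false)) false))) (xorb (a24 && (xorb (a31 && (xorb (a42 && true) false)) (xorb (a32 && (xorb (a41 && true) false)) false))) false)))) (xorb (a14 && (xorb (a21 && (xorb (a32 && (xorb (a43 && true) false)) (xorb (a33 && (xorb (a42 && true) false)) false))) (xorb (a22 && (xorb (a31 && (xorb (a43 && true) false)) (xorb (a33 && (xorb (a41 && true) false))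 false))) (xorb (a23 && (xorb (a31 && (xorb (a42 && true) false)) (xorb (a32 && (xorb (a41 && true) false)) false))) false)))) false))))) (xorb (a01 && (xorb (a10 && (xorb (a22 && (xorb (a33 && (xorb (a44 && true) false)) (xorb (a34 && (xorb (a43 && true) false)) false))) (xorb (a23 && (xorb (a32 && (xorb (a44 && true) false)) (xorb (a34 && (xorb (a42 && true) false)) false))) (xorb (a24 && (xorb (a32 && (xorb (a43 && true) false)) (xorb (a33 && (xorb (a42 && true) false)) false))) false)))) (xorb (a12 && (xorb (a20 && (xorb (a33 && (xorb (a44 && true) false)) (xorb (a34 && (xorb (a43 && true) false)) false))) (xorb (a23 && (xorb (a30 && (xorb (a44 && true) false)) (xorb (a34 && (xorb (a40 && true) false)) false))) (xorb (a24 && (xorb (a30 && (xorb (a43 && true) false)) (xorb (a33 && (xorb (a40 && true) false)) false))) false)))) (xorb (a13 && (xorb (a20 && (xorb (a32 && (xorb (a44 && true) false)) (xorb (a34 && (xorb (a42 && true) false)) false))) (xorb (a22 && (xorb (a30 && (xorb (a44 && true) false)) (xorb (a34 && (xorb (a40 && true) false)) false))) (xorb (a24 && (xorb (a30 && (xorb (a42 && true) false)) (xorb (a32 && (xorb (a40 && true) false)) false))) false)))) (xorb (a14 && (xorb (a20 && (xorb (a32 && (xorb (a43 && true) false)) (xorb (a33 && (xorb (a42 && true) false)) false))) (xorb (a22 && (xorb (a30 && (xorb (a43 && true) false)) (xorb (a33 && (xorb (a40 && true) false)) false))) (xorb (a23 && (xorb (a30 && (xorb (a42 && true) false)) (xorb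 (a32 && (xorb (a40 && true) false)) false))) false)))) false))))) (xorb (a02 && (xorb (a10 && (xorb (a21 && (xorb (a33 && (xorb (a44 && true) false)) (xorb (a34 && (xorb (a43 && true) false)) false))) (xorb (a23 && (xorb (a31 && (xorb (a44 && true) false)) (xorb (a34 && (xorb (a41 && true) false)) false))) (xorb (a24 && (xorb (a31 && (xorb (a43 && true) false)) (xorb (a33 && (xorb (a41 && true) false)) false))) false)))) (xorb (a11 && (xorb (a20 && (xorb (a33 && (xorb (a44 && true) false)) (xorb (a34 && (xorb (a43 && true) false)) false))) (xorb (a23 && (xorb (a30 && (xorb (a44 && true) false)) (xorb (a34 && (xorb (a40 && true) false)) false))) (xorb (a24 && (xorb (a30 && (xorb (a43 && true) false)) (xorb (a33 && (xorb (a40 && true) false)) false))) false)))) (xorb (a13 && (xorb (a20 && (xorb (a31 && (xorb (a44 && true) false)) (xorb (a34 && (xorb (a41 && true) false)) false))) (xorb (a21 && (xorb (a30 && (xorb (a44 && true) false)) (xorb (a34 && (xorb (a40 && true) false)) false))) (xorb (a24 && (xorb (a30 && (xorb (a41 && true) false)) (xorb (a31 && (xorb (a40 && true) false)) false))) false)))) (xorb (a14 && (xorb (a20 && (xorb (a31 && (xorb (a43 && true) false)) (xorb (a33 && (xorb (a41 && true) false)) false))) (xorb (a21 && (xorb (a30 && (xorb (a43 && true) false)) (xorb (a33 && (xorb (a40 && true) false)) false))) (xorb (a23 && (xorb (a30 && (xorb (a41 && true) false)) (xorb (a31 && (xorb (a40 && true) false)) false))) false)))) false))))) (xorb (a03 &&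 (xorb (a10 && (xorb (a21 && (xorb (a32 && (xorb (a44 && true) false)) (xorb (a34 && (xorb (a42 && true) false)) false))) (xorb (a22 && (xorb (a31 && (xorb (a44 && true) false)) (xorb (a34 && (xorb (a41 && true) false)) false))) (xorb (a24 && (xorb (a31 && (xorb (a42 && true) false)) (xorb (a32 && (xorb (a41 && true) false)) false))) false)))) (xorb (a11 && (xorb (a20 && (xorb (a32 && (xorb (a44 && true) false)) (xorb (a34 && (xorb (a42 && true) false)) false))) (xorb (a22 && (xorb (a30 && (xorb (a44 && true) false)) (xorb (a34 && (xorb (a40 && true) false)) false))) (xorb (a24 && (xorb (a30 && (xorb (a42 && true) false)) (xorb (a32 && (xorb (a40 && true) false)) false))) false)))) (xorb (a12 && (xorb (a20 && (xorb (a31 && (xorb (a44 && true) false)) (xorb (a34 && (xorb (a41 && true) false)) false))) (xorb (a21 && (xorb (a30 && (xorb (a44 && true) false)) (xorb (a34 && (xorb (a40 && true) false)) false))) (xorb (a24 && (xorb (a30 && (xorb (a41 && true) false)) (xorb (a31 && (xorb (a40 && true) false)) false))) false)))) (xorb (a14 && (xorb (a20 && (xorb (a31 && (xorb (a42 && true) false)) (xorb (a32 && (xorb (a41 && true) false)) false))) (xorb (a21 && (xorb (a30 && (xorb (a42 && true) false)) (xorb (a32 && (xorb (a40 && true) false)) false))) (xorb (a22 && (xorb (a30 && (xorb (a41 && true) false)) (xorb (a31 && (xorb (a40 && true) false)) false))) false)))) false))))) (xorb (a04 && (xorb (a10 && (xorb (a21 && (xorb (a32 && (xorb (a43 && true)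 false)) (xorb (a33 && (xorb (a42 && true) false)) false))) (xorb (a22 && (xorb (a31 && (xorb (a43 && true) false)) (xorb (a33 && (xorb (a41 && true) false)) false))) (xorb (a23 && (xorb (a31 && (xorb (a42 && true) false)) (xorb (a32 && (xorb (a41 && true) false)) false))) false)))) (xorb (a11 && (xorb (a20 && (xorb (a32 && (xorb (a43 && true) false)) (xorb (a33 && (xorb (a42 && true) false)) false))) (xorb (a22 && (xorb (a30 && (xorb (a43 && true) false)) (xorb (a33 && (xorb (a40 && true) false)) false))) (xorb (a23 && (xorb (a30 && (xorb (a42 && true) false)) (xorb (a32 && (xorb (a40 && true) false)) false))) false)))) (xorb (a12 && (xorb (a20 && (xorb (a31 && (xorb (a43 && true) false)) (xorb (a33 && (xorb (a41 && true) false)) false))) (xorb (a21 && (xorb (a30 && (xorb (a43 && true) false)) (xorb (a33 && (xorb (a40 && true) false)) false))) (xorb (a23 && (xorb (a30 && (xorb (a41 && true) false)) (xorb (a31 && (xorb (a40 && true) false)) false))) false)))) (xorb (a13 && (xorb (a20 && (xorb (a31 && (xorb (a42 && true) false)) (xorb (a32 && (xorb (a41 && true) false)) false))) (xorb (a21 && (xorb (a30 && (xorb (a42 && true) false)) (xorb (a32 && (xorb (a40 && true) false)) false))) (xorb (a22 && (xorb (a30 && (xorb (a41 && true) false)) (xorb (a31 && (xorb (a40 && true) false)) false))) false)))) false))))) false))))).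
Lemma detLb5E (a : nat -> nat -> bool) : detLb 5 a = d5x (a 0 0) (a 0 1) (a 0 2) (a 0 3) (a 0 4) (a 1 0) (a 1 1) (a 1 2) (a 1 3) (a 1 4) (a 2 0) (a 2 1) (a 2 2) (a 2 3) (a 2 4) (a 3 0) (a 3 1) (a 3 2) (a 3 3) (a 3 4) (a 4 0) (a 4 1) (a 4 2) (a 4 3) (a 4 4).
Proof. reflexivity. Qed.
Definition Qchk4 (a00 a01 a02 a03 a10 a11 a12 a13 a20 a21 a22 a23 a30 a31 a32 a33 : bool) :=
  has (fun rows => d4x (xorb (cf rows 0 0) a00) (xorb (cf rows 0 1) a01) (xorb (cf rows 0 2) a02) (xorb (cf rows 0 3) a03) (xorb (cf rows 1 0) a10) (xorb (cf rows 1 1) a11) (xorb (cf rows 1 2) a12) (xorb (cf rows 1 3) a13) (xorb (cf rows 2 0) a20) (xorb (cf rows 2 1) a21) (xorb (cf rows 2 2) a22) (xorb (cf rows 2 3) a23) (xorb (cf rows 3 0) a30) (xorb (cf rows 3 1) a31) (xorb (cf rows 3 2) a32) (xorb (cf rows 3 3) a33)) cand4b.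
Lemma chk4c : all (fun rows => detLb 4 (cf rows) && detLb 4 (fun i j => xorb (cf rows i j) (i == j))) cand4b.
Proof. by vm_compute. Qed.
Lemma chk4 : all (fun l => has (fun rows => condb 4 (cf rows) (fromL 4 l)) cand4b) (blists 16).
Proof.
rewrite (eq_all (a2 := fun l => Qchk4 (fromL 4 l 0 0) (fromL 4 l 0 1) (fromL 4 l 0 2) (fromL 4 l 0 3) (fromL 4 l 1 0) (fromL 4 l 1 1) (fromL 4 l 1 2) (fromL 4 l 1 3) (fromL 4 l 2 0) (fromL 4 l 2 1) (fromL 4 l 2 2) (fromL 4 l 2 3) (fromL 4 l 3 0) (fromL 4 l 3 1) (fromL 4 l 3 2) (fromL 4 l 3 3))); first by vm_compute.
move=> l; rewrite /Qchk4; apply: eq_in_has => rows hr.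
move/allP: chk4c => /(_ rows hr) /andP[h1 h2].
by rewrite /condb h1 h2 detLb4E.
Qed.
Definition Qchk5 (a00 a01 a02 a03 a04 a10 a11 a12 a13 a14 a20 a21 a22 a23 a24 a30 a31 a32 a33 a34 a40 a41 a42 a43 a44 : bool) :=
  has (fun rows => d5x (xorb (cf rows 0 0) a00) (xorb (cf rows 0 1) a01) (xorb (cf rows 0 2) a02) (xorb (cf rows 0 3) a03) (xorb (cf rows 0 4) a04) (xorb (cf rows 1 0) a10) (xorb (cf rows 1 1) a11) (xorb (cf rows 1 2) a12) (xorb (cf rows 1 3) a13) (xorb (cf rows 1 4) a14) (xorb (cf rows 2 0) a20) (xorb (cf rows 2 1) a21) (xorb (cf rows 2 2) a22) (xorb (cf rows 2 3) a23) (xorb (cf rows 2 4) a24) (xorb (cf rows 3 0) a30) (xorb (cf rows 3 1) a31) (xorb (cf rows 3 2) a32) (xorb (cf rows 3 3) a33) (xorb (cf rows 3 4) a34) (xorb (cf rows 4 0) a40) (xorb (cf rows 4 1) a41) (xorb (cf rows 4 2) a42) (xorb (cf rows 4 3) a43) (xorb (cf rows 4 4) a44)) cand5b.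
Lemma chk5c : all (fun rows => detLb 5 (cf rows) && detLb 5 (fun i j => xorb (cf rows i j) (i == j))) cand5b.
Proof. by vm_compute. Qed.
Lemma chk5 : all (fun l => has (fun rows => condb 5 (cf rows) (shDb 3 2 l)) cand5b) (blists 13).
Proof.
rewrite (eq_all (a2 := fun l => Qchk5 (shDb 3 2 l 0 0) (shDb 3 2 l 0 1) (shDb 3 2 l 0 2) (shDb 3 2 l 0 3) (shDb 3 2 l 0 4) (shDb 3 2 l 1 0) (shDb 3 2 l 1 1) (shDb 3 2 l 1 2) (shDb 3 2 l 1 3) (shDb 3 2 l 1 4) (shDb 3 2 l 2 0) (shDb 3 2 l 2 1) (shDb 3 2 l 2 2) (shDb 3 2 l 2 3) (shDb 3 2 l 2 4) (shDb 3 2 l 3 0) (shDb 3 2 l 3 1) (shDb 3 2 l 3 2) (shDb 3 2 l 3 3) (shDb 3 2 l 3 4) (shDb 3 2 l 4 0) (shDb 3 2 l 4 1) (shDb 3 2 l 4 2) (shDb 3 2 l 4 3) (shDb 3 2 l 4 4))); first by vm_compute.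
move=> l; rewrite /Qchk5; apply: eq_in_has => rows hr.
move/allP: chk5c => /(_ rows hr) /andP[h1 h2].
by rewrite /condb h1 h2 detLb5E.
Qed.
Definition wlist : seq (seq bool) := [:: [:: false; false]; [:: false; true]; [:: true; false]; [:: true; true]].
Lemma chkr1 : all (fun l => (nth false l 4 || nth false l 5) ==>
   has (fun wv => has (fun rows => condb 2 (cf rows)
      (fun a b => xorb (fromL 2 l a b) (nth false wv a && nth false l (4 + b)))) cand2b) wlist) (blists 6).
Proof. by vm_compute. Qed.
Lemma chk22 : all (fun l => (detLb 2 (fromL 2 l) && detLb 2 (fun i j => xorb (fromL 2 l i j) (i == j)))
   ==> ((l == [:: false; true; true; true]) || (l == [:: true; true; true; false]))) (blists 4).
Proof. by vm_compute. Qed.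

Definition vals3 : seq 'F_3 := [:: 0; 1; 2%:R].
Lemma vals3P (x : 'F_3) : x \in vals3.
Proof. by case: x => [[|[|[|//]]] Hm]. Qed.
Lemma chk2f : all (fun l => has (fun rows => condF 2 (cfF rows) (fromLF 2 l)) cand2f) (flists vals3 (2 * 2)).
Proof. by vm_compute. Qed.
Lemma chk3f : all (fun l => has (fun rows => condF 3 (cfF rows) (shDF 2 1 l)) cand3f) (flists vals3 5).
Proof. by vm_compute. Qed.


Section GoodLemmas.
Variable F : fieldType.

Lemma Good_tr n (K : 'M[F]_n) : Good K^T -> Good K.
Proof.
case=> X [u1 u2 u3]; exists X^T; split; rewrite -unitmx_tr ?trmxK //.
  by rewrite linearD /= trmxK trmx1.
by rewrite linearD /= !trmxK.
Qed.

Lemma schur_a s m (K1 : 'M[F]_s) (R : 'M[F]_(s, m)) (C : 'M[F]_(m, s)) (K2 : 'M[F]_m)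
  (X1 : 'M[F]_s) (W : 'M[F]_(m, s)) :
  X1 \in unitmx -> X1 + 1%:M \in unitmx -> X1 + K1 \in unitmx ->
  Good (K2 - W *m R) -> Good (block_mx K1 R C K2).
Proof.
move=> u1 u2 u3 [Y [v1 v2 v3]].
exists (block_mx X1 0 (W *m (X1 + K1) - C) Y); split.
- by rewrite unitmxE det_lblock unitrM -!unitmxE u1 v1.
- by rewrite (scalar_mx_block s m) add_block_mx addr0 unitmxE det_lblock unitrM -!unitmxE u2 v2.
- set L := block_mx (1%:M : 'M[F]_s) 0 (- W) 1%:M.
  have uL : L \in unitmx by rewrite unitmxE det_lblock !det1 mulr1 unitr1.
  suff: L *m (block_mx X1 0 (W *m (X1 + K1) - C) Y + block_mx K1 R C K2) \in unitmx.
    by rewrite unitmx_mul => /andP[].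
  rewrite add_block_mx /L mulmx_block.
  rewrite !mul1mx !mul0mx !add0r addr0.
  rewrite subrK mulNmx addNr.
  rewrite addr0 unitmxE det_ublock unitrM -!unitmxE u3 /=.
  by rewrite mulNmx addrC -addrA.
Qed.

Lemma block_good s m (K1 : 'M[F]_s) (R : 'M[F]_(s, m)) (C : 'M[F]_(m, s)) (K2 : 'M[F]_m) :
  Good K1 -> Good K2 -> Good (block_mx K1 R C K2).
Proof.
move=> [X1 [u1 u2 u3]] G2; apply: (@schur_a _ _ _ _ _ _ _ 0 u1 u2 u3).
by rewrite mul0mx subr0.
Qed.

Lemma Good0 n : (1 + 1 : F) != 0 -> Good (0 : 'M[F]_n).
Proof.
move=> h2; exists 1%:M; split; rewrite ?addr0; try by rewrite unitmxE det1 unitr1.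
have -> : 1%:M + 1%:M = (1 + 1)%:M :> 'M[F]_n by rewrite raddfD.
by rewrite unitmxE det_scalar unitrX // unitfE.
Qed.

Lemma kill1 s (R : 'M[F]_(s, 1)) (k : 'M[F]_1) : R != 0 -> exists W : 'M[F]_(1, s), k - W *m R = 0.
Proof.
rewrite matrix_eq0 => /forallPn [i /forallPn [j hij]].
have {j}hij : R i 0 != 0 by rewrite (_ : 0 = j) // ?ord1 //; apply/val_inj; case: j {hij} => [[]].
exists (\matrix_(a < 1, c < s) if c == i then k 0 0 / R i 0 else 0).
apply/matrixP => a b; rewrite !ord1 !mxE (bigD1 i) //= big1 ?addr0.
  by rewrite mxE eqxx divfK // subrr.
by move=> c /negbTE hc; rewrite mxE hc mul0r.
Qed.

End GoodLemmas.


Lemma Good3_F2 (K : 'M['F_2]_3) : Good K.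
Proof. exact: (bf_all chk3). Qed.

Lemma Good4_F2 (K : 'M['F_2]_4) : Good K.
Proof. exact: (bf_all chk4). Qed.

Lemma Good5diag (K3 : 'M['F_2]_3) (B : 'M['F_2]_2) : Good (block_mx K3 0 0 B).
Proof.
apply: (@bf_shape_b 5 13 _ _ chk5 _ (listK K3 ++ listK B)).
  by rewrite size_cat !size_listK.
by move=> i j hi hj; apply: shDb_K.
Qed.

Lemma entfB (R : comNzRingType) m n (A B : 'M[R]_(m, n)) i j :
  entf (A - B) i j = entf A i j - entf B i j.
Proof.
case: (boolP ((i < m) && (j < n))%N) => [/andP[hi hj]|h]; last by rewrite !entf_out // subr0.
rewrite (entf_val (A - B) (Ordinal hi) (Ordinal hj)) // (entf_val A (Ordinal hi) (Ordinal hj)) //.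
by rewrite (entf_val B (Ordinal hi) (Ordinal hj)) // !mxE.
Qed.

Lemma rank1_F2 m (B : 'M['F_2]_2) (R : 'M['F_2]_(m, 2)) :
  R != 0 -> exists W : 'M['F_2]_(2, m), Good (B - W *m R).
Proof.
rewrite matrix_eq0 => /forallPn [i /forallPn [j hij]].
pose l := listK B ++ [:: beta (R i 0); beta (R i 1)].
have hl : l \in blists 6 by rewrite -[6%N]/(size l) blistsP.
have := allP chkr1 l hl.
have -> : (nth false l 4 || nth false l 5) = true.
  rewrite /l /= /beta.
  by case: j hij => [[|[|//]] hj] hij; [rewrite (_ : 0 = Ordinal hj) ?hij //| rewrite (_ : 1 = Ordinal hj) ?hij ?orbT //]; apply/val_inj.
move=> /hasP [wv _ /hasP [rows _ hc]].
exists (\matrix_(a < 2, c < m) if c == i then (nth false wv a)%:R else 0).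
apply: (@good_of_condb 2 _ (cf rows)).
case/and3P: hc => h1 h2 h3; apply/and3P; split => //.
rewrite -(eq_detLb (a := fun a b => xorb (cf rows a b) (xorb (fromL 2 l a b) (nth false wv a && nth false l (4 + b))))) //.
move=> a b ha hb; congr xorb; symmetry.
rewrite entfB betaD.
set W := \matrix_(_ < 2, _ < m) _.
rewrite (entf_val (W *m R) (Ordinal ha) (Ordinal hb)) // mxE.
rewrite (bigD1 i) //= big1 ?addr0; last by move=> c /negbTE hc; rewrite /W mxE hc mul0r.
rewrite /W mxE eqxx betaN betaM beta_nat.
have -> : fromL 2 l a b = beta (entf B a b).
  rewrite /fromL /l nth_cat size_listK ifT; last by nia.
  exact: fromL_K.
congr (xorb _ (_ && _)).
by case: b hb => [|[|//]] hb; rewrite /=; congr (beta (R i _)); apply: val_inj.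
Qed.

Lemma Good_F2 n (K : 'M['F_2]_n) : (3 <= n)%N -> Good K.
Proof.
elim/ltn_ind: n K => n IH K hn.
case: n IH K hn => [|[|[|[|[|[|n]]]]]] IH K hn //.
- exact: Good3_F2.
- exact: Good4_F2.
- rewrite -[K](@submxK _ 3 2 3 2).
  have [hR|hR] := eqVneq (@ursubmx _ 3 2 3 2 K) 0.
    have [hC|hC] := eqVneq (@dlsubmx _ 3 2 3 2 K) 0.
      by rewrite hR hC; apply: Good5diag.
    apply: (@Good_tr _ (3 + 2)); rewrite tr_block_mx.
    have hC' : (@dlsubmx _ 3 2 3 2 K)^T != 0 by rewrite trmx_eq0.
    have [W hW] := rank1_F2 (@drsubmx _ 3 2 3 2 K)^T hC'.
    have [X1 [u1 u2 u3]] := Good3_F2 (@ulsubmx _ 3 2 3 2 K)^T.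
    exact: schur_a u1 u2 u3 hW.
  have [W hW] := rank1_F2 (@drsubmx _ 3 2 3 2 K) hR.
  have [X1 [u1 u2 u3]] := Good3_F2 (@ulsubmx _ 3 2 3 2 K).
  exact: schur_a u1 u2 u3 hW.
- rewrite -[K](@submxK _ 3 n.+3 3 n.+3).
  apply: (@block_good _ 3 n.+3); first exact: Good3_F2.
  apply: IH => //; lia.
Qed.

Lemma Good2_F3 (K : 'M['F_3]_2) : Good K.
Proof.
apply: (@bf_shape_F _ 2 4 vals3 _ _ chk2f K (listKF K)).
- by rewrite size_listKF.
- exact: all_listKF vals3P.
- by move=> i j hi hj; apply: fromLF_K.
Qed.

Lemma Good3diag_F3 (K2 : 'M['F_3]_2) (k : 'M['F_3]_1) : Good (block_mx K2 0 0 k).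
Proof.
apply: (@bf_shape_F _ 3 5 vals3 _ _ chk3f _ (listKF K2 ++ listKF k)).
- by rewrite size_cat !size_listKF.
- by rewrite all_cat !(all_listKF _ vals3P).
- by move=> i j hi hj; apply: shDF_K.
Qed.

Lemma Good_F3 n (K : 'M['F_3]_n) : (2 <= n)%N -> Good K.
Proof.
elim/ltn_ind: n K => n IH K hn.
case: n IH K hn => [|[|[|[|n]]]] IH K hn //.
- exact: Good2_F3.
- rewrite -[K](@submxK _ 2 1 2 1).
  have h2 : (1 + 1 : 'F_3) != 0 by [].
  have [hR|hR] := eqVneq (@ursubmx _ 2 1 2 1 K) 0.
    have [hC|hC] := eqVneq (@dlsubmx _ 2 1 2 1 K) 0.
      by rewrite hR hC; apply: Good3diag_F3.
    apply: (@Good_tr _ (2 + 1)); rewrite tr_block_mx.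
    have hC' : (@dlsubmx _ 2 1 2 1 K)^T != 0 by rewrite trmx_eq0.
    have [W hW] := @kill1 _ _ (@dlsubmx _ 2 1 2 1 K)^T (@drsubmx _ 2 1 2 1 K)^T hC'.
    have [X1 [u1 u2 u3]] := Good2_F3 (@ulsubmx _ 2 1 2 1 K)^T.
    apply: (@schur_a _ 2 1 _ _ _ _ X1 W u1 u2 u3).
    by rewrite hW; apply: Good0.
  have [W hW] := @kill1 _ _ (@ursubmx _ 2 1 2 1 K) (@drsubmx _ 2 1 2 1 K) hR.
  have [X1 [u1 u2 u3]] := Good2_F3 (@ulsubmx _ 2 1 2 1 K).
  apply: (@schur_a _ 2 1 _ _ _ _ X1 W u1 u2 u3).
  by rewrite hW; apply: Good0.
- rewrite -[K](@submxK _ 2 n.+2 2 n.+2).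
  apply: (@block_good _ 2 n.+2); first exact: Good2_F3.
  apply: IH => //; lia.
Qed.

Lemma Good1_big p (k : 'M['F_p]_1) : prime p -> (5 <= p)%N -> Good k.
Proof.
move=> pp p5.
have ch := pchar_Fp pp.
have n0 (m : nat) : (0 < m < p)%N -> (m%:R : 'F_p) != 0.
  move=> /andP[m0 mp]; rewrite -(dvdn_pcharf ch); apply/negP => /(dvdn_leq m0); lia.
have sc (x : 'F_p) : (x%:M : 'M['F_p]_1) \in unitmx = (x != 0).
  by rewrite unitmxE det_scalar1 unitfE.
rewrite [k]mx11_scalar; set a := k 0 0.
have [ha|ha] := eqVneq a (-1).
- exists (2%:R)%:M; rewrite -!raddfD /= !sc ha; split.
  + by apply: n0; lia.
  + by rewrite natr1; apply: n0; lia.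
  + by rewrite -natr1 addrK; exact: oner_neq0.
- exists 1%:M; rewrite -!raddfD /= !sc; split.
  + exact: oner_neq0.
  + by rewrite -mulr2n; apply: n0; lia.
  + by rewrite addrC addr_eq0.
Qed.

Lemma Good_big p n (K : 'M['F_p]_n) : prime p -> (5 <= p)%N -> (1 <= n)%N -> Good K.
Proof.
move=> pp p5; elim: n K => [//|[|n] IH] K _; first exact: Good1_big.
rewrite -[K](@submxK _ 1 n.+1 1 n.+1).
by apply: (@block_good _ 1 n.+1); [apply: Good1_big | apply: IH].
Qed.

Local Close Scope ring_scope.

Section CTsec.
Variables (T : finType) (f : T -> T) (finj : injective f).

Let symf : connect_sym (frel f) := fconnect_sym finj.

Lemma order_conn x y : fconnect f x y -> order f y = order f x.
Proof.
move=> hxy; rewrite /order; apply: eq_card => z.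
by rewrite !inE /= -(same_connect symf hxy).
Qed.

Lemma cc_mul j : (cycle_count f j * j = #|[set x | order f x == j]|)%N.
Proof.
set D := [set x | order f x == j].
set P := [set [set y | fconnect f x y] | x : T & order f x == j].
have hP : partition P D.
  apply/and3P; split.
  - apply/eqP/setP => y; apply/bigcupP/idP.
      case=> A /imsetP[x hx ->]; rewrite !inE in hx * => hy.
      by rewrite (order_conn hy).
    move=> hy; exists [set z | fconnect f y z]; last by rewrite inE connect0.
    by apply/imsetP; exists y; rewrite // inE; rewrite inE in hy.
  - apply/trivIsetP => A B /imsetP[x hx ->] /imsetP[z hz ->] hne.
    rewrite -setI_eq0; apply/eqP/setP => y; rewrite !inE.
    apply/negbTE/negP => /andP[hxy hzy]; move/eqP: hne; apply.
    apply/setP => u; rewrite !inE.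
    have hxz : fconnect f x z by apply: connect_trans hxy _; rewrite symf.
    by rewrite (same_connect symf hxz).
  - apply/imsetP => [[x _ e]].
    by have := in_set0 x; rewrite e inE connect0.
rewrite (card_partition hP) (eq_bigr (fun _ => j)) ?sum_nat_const //.
move=> A /imsetP[x hx ->]; rewrite inE in hx.
by rewrite cardsE; move/eqP: hx => <-.
Qed.

Lemma iter_mul x q : iter (q * order f x) f x = x.
Proof.
elim: q => [//|q IH]; by rewrite mulSn iterD IH iter_order.
Qed.

Lemma order_dvd k x : iter k f x = x -> (order f x %| k)%N.
Proof.
move=> hk; have o0 := order_gt0 f x.
have e : iter (k %% order f x) f x = x.
  by rewrite -[in RHS]hk [in RHS](divn_eq k (order f x)) [in RHS]addnC iterD iter_mul.
have := findex_iter (ltn_pmod k o0); rewrite e findex0.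
by move=> /esym /eqP; rewrite /dvdn.
Qed.

Lemma order1 x : (order f x == 1%N) = (f x == x).
Proof.
apply/eqP/eqP => [h|h].
  by have := iter_order finj x; rewrite h.
have := order_dvd (k := 1) (x := x) h; rewrite dvdn1 => /eqP.
by [].
Qed.

Lemma CT_prime k : prime k -> (forall x, iter k f x = x) ->
  CT f = [seq (if j == 1 then #|[set x | f x == x]|
               else if j == k then ((#|T| - #|[set x | f x == x]|) %/ k)%N else 0%N)
         | j <- iota 1 #|T|].
Proof.
move=> pk hk; rewrite /CT; apply/eq_in_map => j; rewrite mem_iota => /andP[j1 _].
have k1 : k != 1%N by case: eqP pk => // ->.
have k0 : (0 < k)%N by apply: prime_gt0.
have ok x : (order f x == 1%N) || (order f x == k).
  by case/primeP: pk => _ H; apply: H; apply: order_dvd.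
have [->|j1'] := eqVneq j 1%N.
  rewrite -[cycle_count f 1]muln1 cc_mul; apply: eq_card => x.
  by rewrite !inE order1.
have [->|jk] := eqVneq j k.
  rewrite -(mulnK (cycle_count f k) k0) cc_mul.
  have -> : #|[set x | order f x == k]| = #|~: [set x | f x == x]|.
    apply: eq_card => x; rewrite !inE -order1.
    by case/orP: (ok x) => /eqP ->; rewrite eqxx ?k1 // eq_sym (negbTE k1).
  by rewrite -(cardsC [set x | f x == x]) addKn.
have : (cycle_count f j * j = 0)%N.
  rewrite cc_mul; apply: eq_card0 => x; rewrite !inE.
  by case/orP: (ok x) => /eqP ->; rewrite eq_sym ?(negbTE j1') ?(negbTE jk).
by move/eqP; rewrite muln_eq0 (gtn_eqF j1) orbF => /eqP.
Qed.
End CTsec.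

Local Open Scope ring_scope.


Lemma CGLE p d (A : 'M['F_p]_d) : (A \in @CGL p d) = (A \in unitmx) && (A + 1%:M \in unitmx).
Proof.
rewrite inE /= /eigenvalue /eigenspace negbK kermx_eq0 row_free_unit.
by rewrite (_ : (-1)%:M = - 1%:M) ?opprK //; apply/matrixP => i j; rewrite !mxE; case: (i == j); rewrite ?mulr1n ?mulr0n ?oppr0.
Qed.

Lemma CGLE' p d (A : 'M['F_p]_d) : @CGL p d A = (A \in unitmx) && (A + 1%:M \in unitmx).
Proof. exact: (CGLE A). Qed.

Lemma CGLpow_unit p d l (M : 'M['F_p]_d) : CGLpow l M -> M \in unitmx.
Proof.
case=> s [_ hs ->]; elim: s hs => [_|A s IH /= /andP[hA hs]] /=.
  by rewrite unitmxE det1 unitr1.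
by rewrite unitmx_mul IH // andbT; rewrite CGLE' in hA; case/andP: hA.
Qed.

Lemma CGLpow_cons p d l (A M : 'M['F_p]_d) : A \in @CGL p d -> CGLpow l M -> CGLpow l.+1 (A *m M).
Proof.
move=> hA [s [hl hs ->]]; exists (A :: s); split => //=; first by rewrite hl.
have hA' : @CGL p d A := hA.
by rewrite hA'.
Qed.

Lemma CGLpow1 p d (A : 'M['F_p]_d) : CGLpow 1 A <-> A \in @CGL p d.
Proof.
split.
  case=> s [hs hall ->]; case: s hs hall => [|B [|? ?]] //= _ /andP[hB _].
  by rewrite mulmx1.
move=> hA; have hA' : @CGL p d A := hA.
by exists [:: A]; split; rewrite /= ?hA' ?mulmx1.
Qed.

Lemma Good_CGL p d : Good (1%:M : 'M['F_p]_d) -> exists C : 'M['F_p]_d, C \in @CGL p d.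
Proof. by case=> X [u1 u2 _]; exists X; rewrite CGLE u1 u2. Qed.

Lemma unit_CGLpow p d l (M : 'M['F_p]_d) :
  (forall K : 'M['F_p]_d, Good K) -> (2 <= l)%N -> M \in unitmx -> CGLpow l M.
Proof.
move=> G; have [C hC] := Good_CGL (G 1%:M).
have uC : C \in unitmx by rewrite CGLE in hC; case/andP: hC.
elim: l M => [//|[//|[|l]] IH] M _ uM.
- have [X [u1 u2 u3]] := G M.
  have -> : M = X *m (invmx X *m M) by rewrite mulmxA mulmxV // mul1mx.
  apply: CGLpow_cons; first by rewrite CGLE u1 u2.
  apply/CGLpow1; rewrite CGLE unitmx_mul unitmx_inv u1 uM /=.
  have -> : invmx X *m M + 1%:M = invmx X *m (M + X) by rewrite mulmxDr mulVmx.
  by rewrite unitmx_mul unitmx_inv u1 addrC.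
- have -> : M = C *m (invmx C *m M) by rewrite mulmxA mulmxV // mul1mx.
  apply: CGLpow_cons => //; apply: IH => //.
  by rewrite unitmx_mul unitmx_inv uC.
Qed.


Lemma aff_inj p d (M : 'M['F_p]_d) w : M \in unitmx -> injective (aff M w).
Proof.
move=> uM x y; rewrite /aff => /addIr h.
by rewrite -(mulmxK uM x) h mulmxK.
Qed.

Lemma CT_transl p d (w : 'rV['F_p]_d) : prime p ->
  CT (aff 1%:M w) = [seq (if j == 1 then (if w == 0%R then #|{: 'rV['F_p]_d}| else 0)
                          else if j == p then (if w == 0%R then 0 else #|{: 'rV['F_p]_d}| %/ p)
                          else 0)%N | j <- iota 1 #|{: 'rV['F_p]_d}|].
Proof.
move=> pp.
have u1 : (1%:M : 'M['F_p]_d) \in unitmx by rewrite unitmxE det1 unitr1.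
have hit : forall x, iter p (aff 1%:M w) x = x.
  move=> x; have e n : iter n (aff 1%:M w) x = x + w *+ n.
    by elim: n => [|n IH]; rewrite ?mulr0n ?addr0 // iterS IH /aff mulmx1 mulrSr addrA.
  rewrite e (_ : w *+ p = 0) ?addr0 //.
  by apply/matrixP => i j; rewrite mulmxnE mxE (mulrn_pchar (pchar_Fp pp)).
rewrite (CT_prime (@aff_inj _ _ _ w u1) pp hit).
have -> : [set x | aff 1%:M w x == x] = if w == 0 then setT else set0.
  apply/setP => x; rewrite inE /aff mulmx1 -{2}[x]addr0 (inj_eq (addrI x)).
  by case: eqP => _; rewrite !inE.
by apply: eq_map => j; case: (w == 0%R); rewrite ?cardsT ?cards0 ?subnn ?div0n ?subn0.
Qed.

Lemma addMM m n (X : 'M['F_2]_(m, n)) : X + X = 0.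
Proof.
apply/matrixP => i j; rewrite !mxE.
by case: (F2_cases (X i j)) => ->; apply/eqP.
Qed.

Lemma CT_ord3 (M : 'M['F_2]_2) (w : 'rV['F_2]_2) :
  M *m M = M + 1%:M -> M \in unitmx -> M + 1%:M \in unitmx ->
  CT (aff M w) = [:: 1; 0; 1; 0]%N.
Proof.
move=> hMM uM uM1.
have hit : forall x, iter 3 (aff M w) x = x.
  move=> x; rewrite /= /aff !mulmxDl -!mulmxA hMM !mulmxDr !mulmx1 hMM mulmxDr mulmx1.
  rewrite (addrAC (x *m M) x (x *m M)) (addMM (x *m M)) add0r.
  by rewrite -addrA -addrA (addMM (w *m M + w)) addr0.
rewrite (CT_prime (@aff_inj _ _ _ w uM) (isT : prime 3) hit).
have x0P y : (aff M w y == y) = (y == w *m invmx (M + 1%:M)).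
  apply/eqP/eqP => [h|->].
    rewrite -[y](mulmxK uM1) mulmxDr mulmx1; congr (_ *m _).
    by rewrite -[X in _ *m M + X]h /aff addrA addMM add0r.
  set x0 := w *m invmx (M + 1%:M).
  have e : x0 *m M + x0 = w.
    by rewrite -[X in _ + X]mulmx1 -mulmxDr /x0 mulmxKV.
  by rewrite /aff -e addrA addMM add0r.
have -> : #|[set y | aff M w y == y]| = 1%N.
  by rewrite (eq_card (B := pred1 (w *m invmx (M + 1%:M)))) ?card1 // => y; rewrite !inE x0P.
have -> : #|{: 'rV['F_2]_2}| = 4%N by rewrite card_mx card_Fp.
by [].
Qed.

Lemma sc1 (F : fieldType) (a : F) : ((a%:M : 'M[F]_1) \in unitmx) = (a != 0).
Proof. by rewrite unitmxE det_scalar1 unitfE. Qed.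

Lemma CGL12 (A : 'M['F_2]_1) : ~~ (A \in @CGL 2 1).
Proof.
rewrite CGLE; move: (mx11_scalar A) => ->; rewrite -raddfD /= !sc1.
by case: (F2_cases (A 0 0)) => ->.
Qed.

Lemma CGL13 (A : 'M['F_3]_1) : A \in @CGL 3 1 -> A = 1%:M.
Proof.
rewrite CGLE; move: (mx11_scalar A) => ->; rewrite -raddfD /= !sc1.
move: (A 0 0) => a; case: a => [[|[|[|//]]] Ha] //= _.
by congr (_%:M); apply/val_inj.
Qed.

Lemma CGLpow13 l (M : 'M['F_3]_1) : CGLpow l M -> M = 1%:M.
Proof.
case=> s [_ hs ->]; elim: s hs => [//|A s IH] /= /andP[hA hs].
by rewrite (CGL13 hA) IH // mul1mx.
Qed.

Lemma CGLpow13' l : CGLpow l (1%:M : 'M['F_3]_1).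
Proof.
exists (nseq l 1%:M); split; first by rewrite size_nseq.
  have h1 : (1%:M : 'M['F_3]_1) \in @CGL 3 1 by rewrite CGLE -raddfD /= !sc1.
  by rewrite all_nseq; apply/orP; right; exact: h1.
by elim: l => [//|l IH] /=; rewrite -IH mul1mx.
Qed.

Lemma CT13 (w : 'rV['F_3]_1) : CT (aff 1%:M w) = if w == 0 then [:: 3; 0; 0]%N else [:: 0; 0; 1]%N.
Proof.
rewrite CT_transl // card_mx card_Fp //.
by case: (w == 0).
Qed.

Lemma CT22 (w : 'rV['F_2]_2) : CT (aff 1%:M w) = if w == 0 then [:: 4; 0; 0; 0]%N else [:: 0; 2; 0; 0]%N.
Proof.
rewrite CT_transl // card_mx card_Fp //.
by case: (w == 0).
Qed.

Definition C2 : 'M['F_2]_2 := \matrix_(i < 2, j < 2) (fromL 2 [:: false; true; true; true] i j)%:R.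

Lemma C2sq : C2 *m C2 = C2 + 1%:M.
Proof.
apply/matrixP => i j; rewrite !mxE !big_ord_recl big_ord0 !mxE.
by case: i => [[|[|//]] hi]; case: j => [[|[|//]] hj]; apply/eqP.
Qed.

Lemma C2C2' : C2 *m (C2 + 1%:M) = 1%:M.
Proof. by rewrite mulmxDr C2sq mulmx1 addrAC addMM add0r. Qed.
Lemma C2'C2 : (C2 + 1%:M) *m C2 = 1%:M.
Proof. by rewrite mulmxDl C2sq mul1mx addrAC addMM add0r. Qed.
Lemma C2'sq : (C2 + 1%:M) *m (C2 + 1%:M) = C2.
Proof.
by rewrite mulmxDl C2C2' mul1mx addrCA addMM addr0.
Qed.

Lemma C2u : C2 \in unitmx.
Proof. by case: (mulmx1_unit C2C2'). Qed.
Lemma C2'u : C2 + 1%:M \in unitmx.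
Proof. by case: (mulmx1_unit C2C2'). Qed.

Lemma C2_CGL : C2 \in @CGL 2 2.
Proof. by rewrite CGLE C2u C2'u. Qed.
Lemma C2'_CGL : C2 + 1%:M \in @CGL 2 2.
Proof. by rewrite CGLE C2'u -addrA addMM addr0 C2u. Qed.

Lemma unitF2 n (A : 'M['F_2]_n) : (A \in unitmx) = detLb n (fun i j => beta (entf A i j)).
Proof. by rewrite unitmx_detL -/(beta _) beta_detL. Qed.

Lemma CGL22 (A : 'M['F_2]_2) : A \in @CGL 2 2 -> A = C2 \/ A = C2 + 1%:M.
Proof.
rewrite CGLE !unitF2 => /andP[h1 h2].
have hl : listK A \in blists 4 by rewrite -[4%N]/(2 * 2)%N -(size_listK A) blistsP.
have := allP chk22 _ hl.
rewrite (eq_detLb (b := fun i j => beta (entf A i j))); last by move=> i j hi hj; rewrite fromL_K.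
rewrite h1 andTb.
rewrite (eq_detLb (b := fun i j => beta (entf (A + 1%:M) i j))); last first.
  by move=> i j hi hj; rewrite fromL_K // entfD entf1 // betaD beta_nat.
rewrite h2 implyTb => /orP[] /eqP hL; [left|right].
  by apply/matrixP => i j; rewrite mxE (F2_beta (A i j)) -(entfE A i j) -(fromL_K A (ltn_ord i) (ltn_ord j)) hL.
apply/matrixP => i j; rewrite (F2_beta (A i j)) -(entfE A i j) -(fromL_K A (ltn_ord i) (ltn_ord j)) hL.
rewrite !mxE.
by case: i => [[|[|//]] hi]; case: j => [[|[|//]] hj]; apply/eqP.
Qed.

Lemma CGLpow22 l (M : 'M['F_2]_2) : CGLpow l M -> [\/ M = 1%:M, M = C2 | M = C2 + 1%:M].
Proof.
case=> s [_ hs ->]; elim: s hs => [_|A s IH] /=; first by constructor.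
case/andP => /CGL22 [] -> /IH [] ->.
- by rewrite mulmx1; constructor 2.
- by rewrite C2sq; constructor 3.
- by rewrite C2C2'; constructor 1.
- by rewrite mulmx1; constructor 3.
- by rewrite C2'C2; constructor 1.
- by rewrite C2'sq; constructor 2.
Qed.

Lemma CGLpow22' l : (2 <= l)%N ->
  [/\ CGLpow l (1%:M : 'M['F_2]_2), CGLpow l C2 & CGLpow l (C2 + 1%:M)].
Proof.
have h1 := C2_CGL; have h2 := C2'_CGL.
elim: l => [//|[//|[|l]] IH] _.
- split.
  + by rewrite -C2C2'; apply: CGLpow_cons => //; apply/CGLpow1.
  + by rewrite -C2'sq; apply: CGLpow_cons => //; apply/CGLpow1.
  + by rewrite -C2sq; apply: CGLpow_cons => //; apply/CGLpow1.
- case: (IH isT) => i1 i2 i3; split.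
  + by rewrite -C2C2'; apply: CGLpow_cons.
  + by rewrite -[C2]mulmx1; apply: CGLpow_cons.
  + by rewrite -C2sq; apply: CGLpow_cons.
Qed.

Lemma GoodAll p d : prime p -> (0 < d)%N -> (d, p) != (1, 2)%N -> (d, p) != (1, 3)%N ->
  (d, p) != (2, 2)%N -> forall K : 'M['F_p]_d, Good K.
Proof.
move=> pp d0 h12 h13 h22 K.
have p1 := prime_gt1 pp.
have [p5|p5] := leqP 5 p; first exact: Good_big.
have : (p == 2%N) || (p == 3%N).
  by case: p pp p1 p5 {h12 h13 h22 K} => [|[|[|[|[|]]]]].
case/orP => /eqP ep; subst p.
- apply: Good_F2.
  have : d != 1%N by apply: contra h12 => /eqP ->.
  have : d != 2%N by apply: contra h22 => /eqP ->.
  lia.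
- apply: Good_F3.
  have : d != 1%N by apply: contra h13 => /eqP ->.
  lia.
Qed.

Theorem corollary3p3 (p d l : nat) :
  prime p -> (0 < d)%N -> (0 < l)%N ->
  forall c : seq nat,
    Gamma d p l c <->
    exists (M : 'M['F_p]_d) (w : 'rV['F_p]_d), CGLpow l M /\ c = CT (aff M w).
Proof.
move=> pp d0 l0 c; rewrite /Gamma.
have [->|l1] := eqVneq l 1%N.
  split=> [[A [v [hA ->]]]|[M [w [hM ->]]]].
    by exists A, v; split => //; apply/CGLpow1.
  by exists M, w; split => //; apply/CGLpow1.
have l2 : (2 <= l)%N by lia.
have [e12|h12] := eqVneq (d, p) (1%N, 2%N).
  case: e12 => ed ep; subst d p; split => // [[M [w [[s [hs hall _]] _]]]].
  case: s hs hall => [|A s] /=; first by move=> hs; rewrite -hs in l0.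
  by move=> _ /andP[hA _]; case/negP: (CGL12 A).
have [e13|h13] := eqVneq (d, p) (1%N, 3%N).
  case: e13 => ed ep; subst d p; split.
    case=> ->.
      by exists 1%:M, 0; split; [exact: CGLpow13' | rewrite CT13 eqxx].
    exists 1%:M, (const_mx 1); split; first exact: CGLpow13'.
    rewrite CT13; case: eqP => // /matrixP /(_ 0 0); rewrite !mxE.
    by move/eqP.
  case=> M [w [hM ->]]; rewrite (CGLpow13 hM) CT13.
  by case: (w == 0); [left|right].
have [e22|h22] := eqVneq (d, p) (2%N, 2%N).
  case: e22 => ed ep; subst d p; case: (CGLpow22' l2) => i1 i2 i3; split.
    case=> ->.
    - by exists 1%:M, 0; split => //; rewrite CT22 eqxx.
    - exists 1%:M, (const_mx 1); split => //.
      rewrite CT22; case: eqP => // /matrixP /(_ 0 0); rewrite !mxE.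
      by move/eqP.
    - exists C2, 0; split => //.
      by rewrite CT_ord3 // ?C2u ?C2'u // C2sq.
  case=> M [w [hM ->]]; case: (CGLpow22 hM) => ->.
  - by rewrite CT22; case: (w == 0); [constructor 1|constructor 2].
  - by constructor 3; rewrite CT_ord3 // ?C2u ?C2'u // C2sq.
  - constructor 3; rewrite CT_ord3 // ?C2u ?C2'u //.
      by rewrite C2'sq addrAC -addrA addMM addr0.
    by rewrite -addrA addMM addr0 C2u.
have G := GoodAll pp d0 h12 h13 h22.
split=> [[M [v [uM ->]]]|[M [w [hM ->]]]].
  by exists M, v; split => //; apply: unit_CGLpow.
by exists M, w; split => //; apply: CGLpow_unit hM.
Qed.
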